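(* Under the scaled-down notification (SDN) policy, for every volunteer $v\in[V]$ and every $t\in[T]$, the probability that $v$ is active in period $t$ equals $\beta_{v,t}$; moreover, $\beta_{v,t}\ge\frac{1}{2-q}$.
   Context: Online volunteer notification problem. An instance consists of volunteers $[V]$, task types $[S]$, horizon $T$, arrival probabilities $\lambda_{s,t}\ge0$ with $\sum_s\lambda_{s,t}\le1$, match probabilities $p_{v,s}\in[0,1]$, and a probability mass function $g$ on the positive integers with CDF $G(\tau)=\sum_{i\le\tau}g(i)$, $G(0)=0$. In each period $t$ at most one task arrives, of type $s$ with probability $\lambda_{s,t}$, independently across periods. All volunteers start active. Upon an arrival the platform notifies a subset of volunteers; each notified active volunteer $v$ responds positively independently with probability $p_{v,s}$. A volunteer active and notified at time $t$ becomes inactive (regardless of response) and active again at $t+Z$, $Z\sim g$ independent; inactive volunteers ignore notifications and are unaffected by them. MDHR: $q=\min_{\tau\in\mathbb{N}}\frac{g(\tau)}{1-G(\tau-1)}$ (with $\frac00:=1$). Ex ante solution: $\mathcal{P}$ is the set of $\mathbf{x}$ with $0\le x_{v,s,t}\le1$ and $\sum_{\tau=1}^t\sum_s\lambda_{s,\tau}x_{v,s,\tau}(1-G(t-\tau))\le1$ for all $v,t$; $f(\mathbf{x})=\sum_{t,s}\lambda_{s,t}(1-\prod_v(1-x_{v,s,t}p_{v,s}))$; $\mathbf{x}^*_{LP}$ maximizes $\sum_{t,s}\lambda_{s,t}\min\{\sum_vx_{v,s,t}p_{v,s},1\}$ over $\mathcal{P}$; $\mathbf{x}^*_{AA}$ is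 the output of: $\mathbf{x}^0=\mathbf{0}$, for $i=1..m$ ($m\in\mathbb{N}$) $\mathbf{y}^i\in\arg\max_{\mathbf{x}\in\mathcal{P}}\langle\mathbf{x},\nabla f(\mathbf{x}^{i-1})\rangle$, $\mathbf{x}^i=\mathbf{x}^{i-1}+\mathbf{y}^i/m$, output $\mathbf{x}^m$; $\mathbf{x}^*_{SQ}$ built for $v=1..V$ in order, $(x^{SQ}_{v,s,t})_{s,t}$ optimal for $\max\sum_{t,s}\lambda_{s,t}\prod_{u<v}(1-p_{u,s}x^{SQ}_{u,s,t})p_{v,s}x_{v,s,t}$ s.t. $0\le x_{v,s,t}\le1$ and $\sum_{\tau\le t}\sum_s\lambda_{s,\tau}x_{v,s,\tau}(1-G(t-\tau))\le1$ for all $t$; $\mathbf{x}^*\in\arg\max_{\mathbf{x}\in\{\mathbf{x}^*_{LP},\mathbf{x}^*_{AA},\mathbf{x}^*_{SQ}\}}f(\mathbf{x})$. SDN policy: $\beta_{v,1}=1$ and $\beta_{v,t}=1-\sum_{t'=1}^{t-1}\sum_{s=1}^S\lambda_{s,t'}\frac{x^*_{v,s,t'}}{2-q}(1-G(t-t'))$ for $t\ge2$; when a task of type $s$ arrives at time $t$, each volunteer $v$ is notified independently with probability $\frac{x^*_{v,s,t}}{(2-q)\beta_{v,t}}$. *)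

(* Defs.v *)
From HB Require Import structures.
From mathcomp Require Import all_boot all_order all_algebra.
From mathcomp Require Import all_classical all_reals all_analysis.
Set Implicit Arguments. Unset Strict Implicit. Unset Printing Implicit Defensive.
Import Order.TTheory GRing.Theory Num.Theory.
Import numFieldNormedType.Exports.
Local Open Scope ring_scope.
Local Open Scope classical_set_scope.

(* Periods are 0-based: the ordinal t : 'I_T denotes period t+1 of the paper.
   Only differences of periods occur in the formulas, so this is a pure shift. *)

Definition vec (R : realType) (V S T : nat) := 'I_V -> 'I_S -> 'I_T -> R.

Definition Gc (R : realType) (g : nat -> R) (tau : nat) : R :=
  \sum_(1 <= i < tau.+1) g i.

(* hazard  g(tau) / (1 - G(tau-1)) with 0/0 := 1 (for tau >= 1) *)
Definition hz (R : realType) (g : nat -> R) (tau : nat) : R :=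
  let d := 1 - Gc g tau.-1 in if d == 0 then 1 else g tau / d.

(* MDHR  q = min_{tau >= 1} hz tau  (taken as the infimum, equal to the min
   whenever the min exists) *)
Definition qmdhr (R : realType) (g : nat -> R) : R :=
  inf (range (fun n : nat => hz g n.+1)).

Definition inP (R : realType) V S T (lam : 'I_S -> 'I_T -> R) (g : nat -> R)
    (x : vec R V S T) : Prop :=
  (forall v s t, 0 <= x v s t <= 1) /\
  (forall v (t : 'I_T),
     \sum_(tau < T | (tau <= t)%N) \sum_(s < S)
        lam s tau * x v s tau * (1 - Gc g (t - tau)) <= 1).

Definition fobj (R : realType) V S T (lam : 'I_S -> 'I_T -> R)
    (p : 'I_V -> 'I_S -> R) (x : vec R V S T) : R :=
  \sum_(t < T) \sum_(s < S)
     lam s t * (1 - \prod_(v < V) (1 - x v s t * p v s)).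

Definition lpobj (R : realType) V S T (lam : 'I_S -> 'I_T -> R)
    (p : 'I_V -> 'I_S -> R) (x : vec R V S T) : R :=
  \sum_(t < T) \sum_(s < S) lam s t * Num.min (\sum_(v < V) x v s t * p v s) 1.

Definition is_LP (R : realType) V S T lam p g (x : vec R V S T) : Prop :=
  inP lam g x /\ (forall y, inP lam g y -> lpobj lam p y <= lpobj lam p x).

(* gradient of f (explicit partial derivatives of the multilinear f) *)
Definition gradf (R : realType) V S T (lam : 'I_S -> 'I_T -> R)
    (p : 'I_V -> 'I_S -> R) (x : vec R V S T) : vec R V S T :=
  fun v s t => lam s t * p v s * \prod_(u < V | u != v) (1 - x u s t * p u s).

Definition inner (R : realType) V S T (y z : vec R V S T) : R :=
  \sum_(v < V) \sum_(s < S) \sum_(t < T) y v s t * z v s t.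

Fixpoint aa_iter (R : realType) V S T (m : nat) (ys : nat -> vec R V S T)
    (i : nat) : vec R V S T :=
  match i with
  | 0 => fun _ _ _ => 0
  | i'.+1 => fun v s t => aa_iter m ys i' v s t + ys i'.+1 v s t / m%:R
  end.

Definition is_AA (R : realType) V S T lam p g (m : nat) (x : vec R V S T) : Prop :=
  (0 < m)%N /\
  exists ys : nat -> vec R V S T,
    (forall i, (1 <= i <= m)%N ->
       inP lam g (ys i) /\
       forall y, inP lam g y ->
         inner y (gradf lam p (aa_iter m ys i.-1))
           <= inner (ys i) (gradf lam p (aa_iter m ys i.-1))) /\
    x = aa_iter m ys m.

Definition rowP (R : realType) S T (lam : 'I_S -> 'I_T -> R) (g : nat -> R)
    (xv : 'I_S -> 'I_T -> R) : Prop :=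
  (forall s t, 0 <= xv s t <= 1) /\
  (forall t : 'I_T, \sum_(tau < T | (tau <= t)%N) \sum_(s < S)
        lam s tau * xv s tau * (1 - Gc g (t - tau)) <= 1).

Definition sqobj (R : realType) V S T (lam : 'I_S -> 'I_T -> R)
    (p : 'I_V -> 'I_S -> R) (x : vec R V S T) (v : 'I_V)
    (xv : 'I_S -> 'I_T -> R) : R :=
  \sum_(t < T) \sum_(s < S)
    lam s t * (\prod_(u < V | (u < v)%N) (1 - p u s * x u s t)) * p v s * xv s t.

Definition is_SQ (R : realType) V S T lam p g (x : vec R V S T) : Prop :=
  forall v, rowP lam g (x v) /\
    forall y, rowP lam g y -> sqobj lam p x v y <= sqobj lam p x v (x v).

Definition is_xstar (R : realType) V S T lam p g (x : vec R V S T) : Prop :=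
  exists (xLP xAA xSQ : vec R V S T) (m : nat),
    [/\ is_LP lam p g xLP, is_AA lam p g m xAA, is_SQ lam p g xSQ,
        (x = xLP \/ x = xAA \/ x = xSQ) &
        [/\ fobj lam p xLP <= fobj lam p x, fobj lam p xAA <= fobj lam p x
          & fobj lam p xSQ <= fobj lam p x]].

Definition beta (R : realType) V S T (lam : 'I_S -> 'I_T -> R) (g : nat -> R)
    (x : vec R V S T) (v : 'I_V) (t : 'I_T) : R :=
  1 - \sum_(t' < T | (t' < t)%N) \sum_(s < S)
        lam s t' * (x v s t' / (2 - qmdhr g)) * (1 - Gc g (t - t')).

Definition pnot (R : realType) V S T lam g (x : vec R V S T) v s t : R :=
  x v s t / ((2 - qmdhr g) * beta lam g x v t).

(* Sample space: arrivals, notification coins of every volunteer in every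
   period, and a return delay for every (volunteer, period).  A delay code
   d : 'I_T.+1 encodes Z = d+1; the code T stands for Z > T (only
   min(Z, T+1) can influence activity within the horizon). *)
Definition Omega (V S T : nat) : finType :=
  ({ffun 'I_T -> option 'I_S} * {ffun 'I_V * 'I_T -> bool}
     * {ffun 'I_V * 'I_T -> 'I_T.+1})%type.

Definition w_arr (R : realType) S T (lam : 'I_S -> 'I_T -> R)
    (a : option 'I_S) (t : 'I_T) : R :=
  match a with Some s => lam s t | None => 1 - \sum_(s < S) lam s t end.

Definition w_coin (R : realType) V S T (pi : 'I_V -> 'I_S -> 'I_T -> R)
    (a : option 'I_S) (v : 'I_V) (t : 'I_T) (c : bool) : R :=
  match a with
  | Some s => if c then pi v s t else 1 - pi v s t
  | None => if c then 0 else 1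
  end.

Definition w_del (R : realType) T (g : nat -> R) (d : 'I_T.+1) : R :=
  if (d < T)%N then g d.+1 else 1 - Gc g T.

Definition weight (R : realType) V S T lam g (x : vec R V S T)
    (w : Omega V S T) : R :=
  let: (a, c, d) := w in
  (\prod_(t < T) w_arr lam (a t) t)
  * (\prod_(vt : 'I_V * 'I_T) w_coin (pnot lam g x) (a vt.2) vt.1 vt.2 (c vt))
  * (\prod_(vt : 'I_V * 'I_T) w_del g (d vt)).

Definition Pr (R : realType) V S T lam g (x : vec R V S T)
    (E : Omega V S T -> bool) : R :=
  \sum_(w : Omega V S T) weight lam g x w * (E w)%:R.

Definition notif V S T (w : Omega V S T) (v : 'I_V) (n : nat) : bool :=
  let: (a, c, _) := w in
  match (insub n : option 'I_T) with
  | Some i => (a i != None) && c (v, i)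
  | None => false
  end.

Definition Zof V S T (w : Omega V S T) (v : 'I_V) (n : nat) : nat :=
  let: (_, _, d) := w in
  match (insub n : option 'I_T) with
  | Some i => (d (v, i)).+1
  | None => 0
  end.

(* earliest period from which v is active again (given the history before n) *)
Fixpoint ret V S T (w : Omega V S T) (v : 'I_V) (n : nat) : nat :=
  match n with
  | 0 => 0
  | n'.+1 => let r := ret w v n' in
             if (r <= n')%N && notif w v n' then (n' + Zof w v n')%N else r
  end.

Definition active V S T (w : Omega V S T) (v : 'I_V) (n : nat) : bool :=
  (ret w v n <= n)%N.

(* Main.v *)
Require Import Defs.
From HB Require Import structures.
From mathcomp Require Import all_boot all_order all_algebra.
From mathcomp Require Import all_classical all_reals all_analysis.
From mathcomp Require Import ring lra zify.
Import Order.TTheory GRing.Theory Num.Theory.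
Import numFieldNormedType.Exports.
Local Open Scope classical_set_scope.
Local Open Scope ring_scope.
Set Implicit Arguments. Unset Strict Implicit. Unset Printing Implicit Defensive.

Lemma fiber_factor (R : realType) (Om Sg : finType) (s : Om -> Sg)
  (u : Om -> Sg -> Om) (K H : Sg -> R) (Wr G : Om -> R) (s0 : Sg) :
  (forall w sg, s (u w sg) = sg) -> (forall w sg sg', u (u w sg) sg' = u w sg') ->
  (forall w, u w (s w) = w) ->
  (forall w sg, Wr (u w sg) = Wr w) -> (forall w sg, G (u w sg) = G w) ->
  \sum_w K (s w) * Wr w * G w * H (s w)
  = (\sum_sg K sg * H sg) * \sum_(w | s w == s0) Wr w * G w.
Proof.
move=> su uu us Wu Gu.
rewrite (partition_big s predT) //= big_distrl /=; apply: eq_bigr => sg _.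
transitivity (K sg * H sg * \sum_(w | s w == sg) Wr w * G w).
  rewrite big_distrr /=; apply: eq_bigr => w /eqP <-; ring.
congr (_ * _).
rewrite (reindex_onto (fun w => u w sg) (fun w => u w s0)) /=; last first.
  by move=> w /eqP <-; rewrite uu us.
apply: eq_big => [w|w _]; last by rewrite Wu Gu.
rewrite su eqxx /= uu; apply/eqP/eqP => [<-|<-]; [by rewrite su | by rewrite us].
Qed.

Lemma sum_ffun_prod (R : realType) (I J : finType) (F : I -> J -> R) (i0 : I)
  (h : J -> R) :
  \sum_(f : {ffun I -> J}) (\prod_i F i (f i)) * h (f i0)
  = (\sum_j F i0 j * h j) * \prod_(i | i != i0) \sum_j F i j.
Proof.
transitivity (\sum_(f : {ffun I -> J})
   \prod_i (F i (f i) * (if i == i0 then h (f i) else 1))).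
  apply: eq_bigr => f _; rewrite big_split /=; congr (_ * _).
  rewrite (bigD1 i0) //= eqxx.
  rewrite [X in _ = _ * X]big1 ?mulr1 // => i /negbTE -> //.
transitivity (\prod_i \sum_j (F i j * (if i == i0 then h j else 1))).
  by rewrite bigA_distr_bigA.
rewrite (bigD1 i0) //= eqxx; congr (_ * _).
apply: eq_bigr => i Hi.
by rewrite (negbTE Hi); apply: eq_bigr => j _; rewrite mulr1.
Qed.

Lemma sum_pair (R : realType) (A B : finType) (F : A * B -> R) :
  \sum_(p : A * B) F p = \sum_a \sum_b F (a, b).
Proof. by rewrite pair_big; apply: eq_bigr => -[]. Qed.

Lemma sum_option (R : realType) (A : finType) (F : option A -> R) :
  \sum_(o : option A) F o = F None + \sum_a F (Some a).
Proof.
rewrite (bigD1 None) //=; congr (_ + _).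
rewrite (reindex_omap Some id) /=; last by case.
by apply: eq_bigl => a; rewrite eqxx.
Qed.

Lemma prod_slice (R : realType) (V T : nat) (n : 'I_T) (F : 'I_V * 'I_T -> R) :
  \prod_(vt : 'I_V * 'I_T | vt.2 == n) F vt = \prod_u F (u, n).
Proof.
transitivity (\prod_(vt : 'I_V * 'I_T | true && (vt.2 == n)) F (vt.1, vt.2)).
  by apply: eq_big => -[].
rewrite -(@pair_big_dep _ _ _ _ _ (fun _ => true) (fun _ t => t == n) (fun u t => F (u, t))).
by apply: eq_bigr => u _; rewrite big_pred1_eq.
Qed.



Lemma Gc_ps (R : realType) (g : nat -> R) k : g 0%N = 0 ->
  Gc g k = \sum_(i < k.+1) g i.
Proof.
move=> g0; transitivity (\sum_(0 <= i < k.+1) g i); last by rewrite big_mkord.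
by rewrite /Gc (big_ltn (ltn0Sn k)) g0 add0r.
Qed.

Lemma Gc_S (R : realType) (g : nat -> R) k : Gc g k.+1 = Gc g k + g k.+1.
Proof. by rewrite /Gc big_nat_recr. Qed.

Lemma Gc_0 (R : realType) (g : nat -> R) : Gc g 0 = 0.
Proof. by rewrite /Gc big_geq. Qed.

Lemma Gc_le1 (R : realType) (g : nat -> R) : g 0%N = 0 -> (forall n, 0 <= g n) ->
  ((fun n : nat => \sum_(k < n) g k) @ \oo --> (1 : R)) -> forall k, Gc g k <= 1.
Proof.
move=> g0 gge0 Hc k; rewrite Gc_ps //.
have hom : {homo (fun n : nat => \sum_(k < n) g k) : n m / (n <= m)%N >-> n <= m}.
  by apply/nondecreasing_seqP => n; rewrite big_ord_recr /= lerDl.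
have := nondecreasing_cvgn_le hom (cvgP _ Hc) k.+1.
by rewrite (cvg_lim (@Rhausdorff R) Hc).
Qed.

Lemma hz_ge0 (R : realType) (g : nat -> R) : (forall n, 0 <= g n) ->
  (forall k, Gc g k <= 1) -> forall n, 0 <= hz g n.
Proof.
move=> gge0 Gle n; rewrite /hz; case: ifP => _; first exact: ler01.
by apply: divr_ge0; [exact: gge0 | rewrite subr_ge0; exact: Gle].
Qed.

Lemma q_le_hz (R : realType) (g : nat -> R) : (forall n, 0 <= g n) ->
  (forall k, Gc g k <= 1) -> forall k, qmdhr g <= hz g k.+1.
Proof.
move=> gge0 Gle k; rewrite /qmdhr; apply: ge_inf; last by exists k.
by exists 0 => _ [n _ <-]; exact: hz_ge0.
Qed.

Lemma q_le1 (R : realType) (g : nat -> R) : (forall n, 0 <= g n) ->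
  (forall k, Gc g k <= 1) -> qmdhr g <= 1.
Proof.
move=> gge0 Gle; apply: (@le_trans _ _ (hz g 1)); first exact: (q_le_hz gge0 Gle 0).
rewrite /hz /= Gc_0 subr0 oner_eq0 divr1.
by have := Gle 1%N; rewrite Gc_S Gc_0 add0r.
Qed.

Lemma hazard (R : realType) (g : nat -> R) : (forall n, 0 <= g n) ->
  (forall k, Gc g k <= 1) -> forall k,
  1 - Gc g k.+1 <= (1 - qmdhr g) * (1 - Gc g k).
Proof.
move=> gge0 Gle k; have := q_le_hz gge0 Gle k; rewrite /hz /= Gc_S.
have := gge0 k.+1; have := Gle k.
case: ifP => [/eqP hd | /negbT hd] g1 g2 hq.
  rewrite hd mulr0; lra.
have dpos : 0 < 1 - Gc g k by rewrite lt_neqAle eq_sym hd subr_ge0 g1.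
rewrite ler_pdivlMr // in hq.
rewrite mulrBl mul1r; lra.
Qed.



Definition slT (V S T : nat) : finType :=
  (option 'I_S * {ffun 'I_V -> bool} * {ffun 'I_V -> 'I_T.+1})%type.

Definition sl V S T (n : 'I_T) (w : Omega V S T) : slT V S T :=
  let: (a, c, d) := w in (a n, [ffun u => c (u, n)], [ffun u => d (u, n)]).

Definition upd V S T (n : 'I_T) (w : Omega V S T) (sg : slT V S T) : Omega V S T :=
  let: (a, c, d) := w in let: (o, cf, df) := sg in
  ([ffun t => if t == n then o else a t],
   [ffun ut : 'I_V * 'I_T => if ut.2 == n then cf ut.1 else c ut],
   [ffun ut : 'I_V * 'I_T => if ut.2 == n then df ut.1 else d ut]).

Lemma sl_upd V S T (n : 'I_T) (w : Omega V S T) sg : sl n (upd n w sg) = sg.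
Proof.
case: w => [[a c] d]; case: sg => [[oo cf] df] /=.
rewrite !ffunE eqxx; congr (_, _, _); apply/ffunP => u; by rewrite !ffunE /= eqxx.
Qed.

Lemma upd_upd V S T (n : 'I_T) (w : Omega V S T) sg sg' :
  upd n (upd n w sg) sg' = upd n w sg'.
Proof.
case: w => [[a c] d]; case: sg => [[oo cf] df]; case: sg' => [[oo' cf'] df'] /=.
congr (_, _, _); apply/ffunP => t; rewrite !ffunE; by case: ifP => // ->.
Qed.

Lemma upd_sl V S T (n : 'I_T) (w : Omega V S T) : upd n w (sl n w) = w.
Proof.
case: w => [[a c] d] /=.
congr (_, _, _); apply/ffunP => t; rewrite !ffunE //.
- by case: eqP => // ->.
- by case: t => u t /=; case: eqP => // ->.
- by case: t => u t /=; case: eqP => // ->.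
Qed.


Definition Kw (R : realType) V S T (lam : 'I_S -> 'I_T -> R) (g : nat -> R)
  (x : vec R V S T) (n : 'I_T) (sg : slT V S T) : R :=
  let: (o, cf, df) := sg in
  w_arr lam o n * \prod_u w_coin (pnot lam g x) o u n (cf u)
  * \prod_u w_del g (df u).

Definition Wr (R : realType) V S T (lam : 'I_S -> 'I_T -> R) (g : nat -> R)
  (x : vec R V S T) (n : 'I_T) (w : Omega V S T) : R :=
  let: (a, c, d) := w in
  (\prod_(t | t != n) w_arr lam (a t) t)
  * (\prod_(vt : 'I_V * 'I_T | vt.2 != n)
        w_coin (pnot lam g x) (a vt.2) vt.1 vt.2 (c vt))
  * \prod_(vt : 'I_V * 'I_T | vt.2 != n) w_del g (d vt).

Lemma weight_split (R : realType) V S T (lam : 'I_S -> 'I_T -> R) (g : nat -> R)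
  (x : vec R V S T) (n : 'I_T) (w : Omega V S T) :
  weight lam g x w = Kw lam g x n (sl n w) * Wr lam g x n w.
Proof.
case: w => [[a c] d]; rewrite /weight /Kw /Wr /sl.
rewrite (bigD1 n) //=.
rewrite [\prod_(vt : 'I_V * 'I_T) w_coin _ _ _ _ _](bigID (fun vt : 'I_V * 'I_T => vt.2 == n)) /=.
rewrite [\prod_(vt : 'I_V * 'I_T) w_del _ _](bigID (fun vt : 'I_V * 'I_T => vt.2 == n)) /=.
rewrite !prod_slice /=.
have -> : \prod_u w_coin (pnot lam g x) (a n) u n ([ffun u0 => c (u0, n)] u)
  = \prod_u w_coin (pnot lam g x) (a n) u n (c (u, n)).
  by apply: eq_bigr => u _; rewrite ffunE.
have -> : \prod_u w_del g ([ffun u0 => d (u0, n)] u) = \prod_u w_del g (d (u, n)).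
  by apply: eq_bigr => u _; rewrite ffunE.
ring.
Qed.

Lemma Wr_upd (R : realType) V S T (lam : 'I_S -> 'I_T -> R) (g : nat -> R)
  (x : vec R V S T) (n : 'I_T) (w : Omega V S T) sg :
  Wr lam g x n (upd n w sg) = Wr lam g x n w.
Proof.
case: w => [[a c] d]; case: sg => [[oo cf] df]; rewrite /Wr /upd.
congr (_ * _ * _); apply: eq_bigr => t H; by rewrite !ffunE (negbTE H).
Qed.

Lemma notif_upd V S T (n : 'I_T) (w : Omega V S T) sg v (m : nat) :
  (m != n)%N -> notif (upd n w sg) v m = notif w v m.
Proof.
move=> Hm; case: w => [[a c] d]; case: sg => [[oo cf] df]; rewrite /notif /upd.
case: insubP => [i _ iv|//].
have /negbTE hi : i != n by apply: contra Hm => /eqP <-; rewrite iv.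
by rewrite !ffunE /= hi.
Qed.

Lemma Zof_upd V S T (n : 'I_T) (w : Omega V S T) sg v (m : nat) :
  (m != n)%N -> Zof (upd n w sg) v m = Zof w v m.
Proof.
move=> Hm; case: w => [[a c] d]; case: sg => [[oo cf] df]; rewrite /Zof /upd.
case: insubP => [i _ iv|//].
have /negbTE hi : i != n by apply: contra Hm => /eqP <-; rewrite iv.
by rewrite !ffunE /= hi.
Qed.

Lemma ret_upd V S T (n : 'I_T) (w : Omega V S T) sg v (m : nat) :
  (m <= n)%N -> ret (upd n w sg) v m = ret w v m.
Proof.
elim: m => [//|m IH] Hm /=.
have Hmn : (m != n)%N by rewrite neq_ltn Hm.
by rewrite IH ?(ltnW Hm) // notif_upd // Zof_upd.
Qed.

Lemma active_upd V S T (n : 'I_T) (w : Omega V S T) sg v :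
  active (upd n w sg) v n = active w v n.
Proof. by rewrite /active ret_upd. Qed.

Definition hb V S T (v : 'I_V) (k : nat) (sg : slT V S T) : bool :=
  let: (o, cf, df) := sg in [&& o != None, cf v & (k < (df v).+1)%N].

Lemma ev_split V S T (v : 'I_V) (t : 'I_T) (m : nat) (w : Omega V S T) :
  (notif w v t && (m < t + Zof w v t)%N) = hb v (m - t) (sl t w).
Proof.
case: w => [[a c] d]; rewrite /notif /Zof /sl /hb valK !ffunE -andbA.
congr (_ && (_ && _)); move: (nat_of_ord t) (nat_of_ord (d (v, t))) => t0 z0; apply/idP/idP => ?; lia.
Qed.



Lemma sum_gshift (R : realType) (g : nat -> R) k N :
  \sum_(i < N) g i.+1 * (k <= i)%:R = Gc g (maxn k N) - Gc g k.
Proof.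
elim: N => [|N IH]; first by rewrite big_ord0 maxn0 subrr.
rewrite big_ord_recr IH; change (nat_of_ord (@ord_max N)) with N.
case: (leqP k N) => H.
  have -> : maxn k N.+1 = N.+1 by apply/maxn_idPr; exact: leqW.
  rewrite mulr1 Gc_S /=; ring.
have -> : maxn k N.+1 = k by apply/maxn_idPl.
by rewrite /= mulr0 addr0.
Qed.

Lemma sum_del (R : realType) (g : nat -> R) T k : (k <= T)%N ->
  \sum_(d : 'I_T.+1) w_del g d * (k < d.+1)%:R = 1 - Gc g k.
Proof.
move=> Hk; rewrite big_ord_recr /=.
under eq_bigr => i _ do rewrite /w_del /= ltn_ord ltnS.
rewrite sum_gshift /w_del /= ltnn ltnS Hk mulr1.
have -> : maxn k T = T by apply/maxn_idPr.
ring.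
Qed.

Lemma sum_del1 (R : realType) (g : nat -> R) T :
  \sum_(d : 'I_T.+1) w_del g d = 1.
Proof.
have := sum_del g (leq0n T); rewrite Gc_0 subr0 => <-.
by apply: eq_bigr => d _; rewrite ltn0Sn mulr1.
Qed.

Lemma sum_coin (R : realType) V S T (pi : 'I_V -> 'I_S -> 'I_T -> R) o u t :
  \sum_(b : bool) w_coin pi o u t b = 1.
Proof. rewrite big_bool; case: o => [s|] /=; [ring | by rewrite add0r]. Qed.

Lemma sum_arr (R : realType) S T (lam : 'I_S -> 'I_T -> R) t :
  \sum_(o : option 'I_S) w_arr lam o t = 1.
Proof. by rewrite sum_option /= subrK. Qed.

Lemma sum_ffun_prod1 (R : realType) (I J : finType) (F : I -> J -> R) :
  (forall i, \sum_j F i j = 1) -> \sum_(f : {ffun I -> J}) \prod_i F i (f i) = 1.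
Proof.
move=> H; transitivity (\prod_i \sum_j F i j); first by rewrite bigA_distr_bigA.
by rewrite big1.
Qed.

Lemma mass (R : realType) V S T (lam : 'I_S -> 'I_T -> R) (g : nat -> R)
  (x : vec R V S T) : \sum_(w : Omega V S T) weight lam g x w = 1.
Proof.
set pi := pnot lam g x.
have hD : \sum_(d : {ffun 'I_V * 'I_T -> 'I_T.+1}) \prod_vt w_del g (d vt) = 1.
  apply: (sum_ffun_prod1 (F := fun vt j => w_del g j)) => vt; exact: sum_del1.
have hC : forall a : {ffun 'I_T -> option 'I_S},
   \sum_(c : {ffun 'I_V * 'I_T -> bool})
      \prod_(vt : 'I_V * 'I_T) w_coin pi (a vt.2) vt.1 vt.2 (c vt) = 1.
  move=> a; apply: (sum_ffun_prod1 (F := fun vt b => w_coin pi (a vt.2) vt.1 vt.2 b)).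
  move=> vt; exact: sum_coin.
have hA : \sum_(a : {ffun 'I_T -> option 'I_S}) \prod_t w_arr lam (a t) t = 1.
  apply: (sum_ffun_prod1 (F := fun t o => w_arr lam o t)) => t; exact: sum_arr.
rewrite sum_pair sum_pair.
transitivity (\sum_(a : {ffun 'I_T -> option 'I_S}) \prod_t w_arr lam (a t) t);
  last exact: hA.
apply: eq_bigr => a _.
transitivity (\prod_t w_arr lam (a t) t * \sum_(c : {ffun 'I_V * 'I_T -> bool})
      \prod_(vt : 'I_V * 'I_T) w_coin pi (a vt.2) vt.1 vt.2 (c vt));
  last by rewrite hC mulr1.
rewrite big_distrr /=; apply: eq_bigr => c _ /=.
transitivity (\prod_t w_arr lam (a t) t *
  \prod_(vt : 'I_V * 'I_T) w_coin pi (a vt.2) vt.1 vt.2 (c vt) *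
  \sum_(d : {ffun 'I_V * 'I_T -> 'I_T.+1}) \prod_vt w_del g (d vt));
  last by rewrite hD mulr1.
rewrite big_distrr /=; apply: eq_bigr => d _ /=.
by [].
Qed.



Lemma Pr_compl (R : realType) V S T (lam : 'I_S -> 'I_T -> R) (g : nat -> R)
  (x : vec R V S T) (E : Omega V S T -> bool) :
  Pr lam g x E = 1 - Pr lam g x (fun w => ~~ E w).
Proof.
suff : Pr lam g x E + Pr lam g x (fun w => ~~ E w) = 1 by move=> <-; ring.
rewrite /Pr -big_split /=.
transitivity (\sum_(w : Omega V S T) weight lam g x w); last exact: mass.
apply: eq_bigr => w _.
by case: (E w) => /=; rewrite ?mulr1n ?mulr0n ?mulr1 ?mulr0 ?addr0 ?add0r.
Qed.

Lemma sumK (R : realType) V S T (lam : 'I_S -> 'I_T -> R) (g : nat -> R)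
  (x : vec R V S T) (n : 'I_T) : \sum_(sg : slT V S T) Kw lam g x n sg = 1.
Proof.
set pi := pnot lam g x.
rewrite sum_pair sum_pair.
transitivity (\sum_(o : option 'I_S) w_arr lam o n); last exact: sum_arr.
apply: eq_bigr => o _.
have hC : \sum_(cf : {ffun 'I_V -> bool}) \prod_u w_coin pi o u n (cf u) = 1.
  apply: (sum_ffun_prod1 (F := fun u b => w_coin pi o u n b)) => u.
  exact: sum_coin.
have hD : \sum_(df : {ffun 'I_V -> 'I_T.+1}) \prod_u w_del g (df u) = 1.
  apply: (sum_ffun_prod1 (F := fun u j => w_del g j)) => u; exact: sum_del1.
transitivity (w_arr lam o n * (\sum_(cf : {ffun 'I_V -> bool}) \prod_u w_coin pi o u n (cf u))
   * \sum_(df : {ffun 'I_V -> 'I_T.+1}) \prod_u w_del g (df u)); last first.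
  by rewrite hC hD !mulr1.
rewrite -mulrA big_distrl /= big_distrr /=; apply: eq_bigr => cf _.
rewrite mulrA big_distrr /=; apply: eq_bigr => df _.
by [].
Qed.

Lemma sumKH (R : realType) V S T (lam : 'I_S -> 'I_T -> R) (g : nat -> R)
  (x : vec R V S T) (v : 'I_V) (n : 'I_T) (k : nat) : (k <= T)%N ->
  \sum_(sg : slT V S T) Kw lam g x n sg * (hb v k sg)%:R
  = (\sum_s lam s n * pnot lam g x v s n) * (1 - Gc g k).
Proof.
move=> Hk; set pi := pnot lam g x.
rewrite sum_pair sum_pair sum_option.
rewrite big1 ?add0r; last first.
  by move=> cf _; rewrite big1 // => df _; rewrite /= mulr0.
rewrite big_distrl /=; apply: eq_bigr => s _.
have hC : \sum_(cf : {ffun 'I_V -> bool})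
    (\prod_u w_coin pi (Some s) u n (cf u)) * (cf v)%:R = pi v s n.
  have := sum_ffun_prod (fun u b => w_coin pi (Some s) u n b) v
     (fun b : bool => (b : nat)%:R).
  move=> /= ->; rewrite big_bool /= mulr1 mulr0 addr0.
  by rewrite big1 ?mulr1 // => u _; rewrite big_bool /=; ring.
have hD : \sum_(df : {ffun 'I_V -> 'I_T.+1})
    (\prod_u w_del g (df u)) * (k < (df v).+1)%:R = 1 - Gc g k.
  have := sum_ffun_prod (fun u j => w_del g j) v
     (fun j : 'I_T.+1 => (k < j.+1 : nat)%:R).
  move=> /= ->; rewrite sum_del //.
  by rewrite big1 ?mulr1 // => u _; exact: sum_del1.
transitivity (lam s n * (\sum_(cf : {ffun 'I_V -> bool})
    (\prod_u w_coin pi (Some s) u n (cf u)) * (cf v)%:R)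
   * \sum_(df : {ffun 'I_V -> 'I_T.+1})
    (\prod_u w_del g (df u)) * (k < (df v).+1)%:R); last by rewrite hC hD.
rewrite -mulrA big_distrl /= big_distrr /=; apply: eq_bigr => cf _.
rewrite mulrA big_distrr /=; apply: eq_bigr => df _.
rewrite -mulnb natrM; ring.
Qed.



Lemma Pr_event (R : realType) V S T (lam : 'I_S -> 'I_T -> R) (g : nat -> R)
  (x : vec R V S T) (v : 'I_V) (n : 'I_T) (k : nat) :
  Pr lam g x (fun w => active w v n && hb v k (sl n w))
  = Pr lam g x (fun w => active w v n)
    * \sum_(sg : slT V S T) Kw lam g x n sg * (hb v k sg)%:R.
Proof.
pose s0 : slT V S T := (None, [ffun => false], [ffun => ord0]).
have FF := fun H => fiber_factor (s := @sl V S T n) (u := @upd V S T n)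
   (Wr := Wr lam g x n) (G := fun w => (active w v n)%:R)
   (Kw lam g x n) H s0 (@sl_upd V S T n) (@upd_upd V S T n) (@upd_sl V S T n)
   (@Wr_upd R V S T lam g x n) (fun w sg => congr1 (fun b : bool => (b%:R : R)) (active_upd n w sg v)).
have E1 : Pr lam g x (fun w => active w v n && hb v k (sl n w))
  = \sum_w Kw lam g x n (sl n w) * Wr lam g x n w * (active w v n)%:R
      * (hb v k (sl n w))%:R.
  by rewrite /Pr; apply: eq_bigr => w _; rewrite (weight_split lam g x n) -mulnb natrM mulrA.
have E2 : Pr lam g x (fun w => active w v n)
  = \sum_w Kw lam g x n (sl n w) * Wr lam g x n w * (active w v n)%:R
      * (fun _ => 1) (sl n w).
  by rewrite /Pr; apply: eq_bigr => w _; rewrite (weight_split lam g x n) mulr1.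
rewrite E1 E2 (FF (fun sg => (hb v k sg)%:R)) (FF (fun _ => 1)).
under [X in _ = (X * _) * _]eq_bigr => sg _ do rewrite mulr1.
by rewrite sumK mul1r mulrC.
Qed.

Lemma ret_count V S T (w : Omega V S T) v (m j : nat) : (m <= j)%N ->
  (\sum_(0 <= t < m) (active w v t && notif w v t && (j < t + Zof w v t)%N))%N
  = (j < ret w v m)%N.
Proof.
elim: m => [|m IH] Hm; first by rewrite big_geq.
rewrite big_nat_recr //= IH ?(ltnW Hm) // /active.
case E1: (ret w v m <= m)%N; case E2: (notif w v m) => /=;
  try by case: (j < ret w v m)%N.
have -> : (j < ret w v m)%N = false.
  by apply/negbTE; rewrite -leqNgt; apply: (leq_trans E1); exact: ltnW.
by case: (j < m + Zof w v m)%N.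
Qed.

Lemma inactive_sum (R : realType) V S T (w : Omega V S T) v (n : 'I_T) :
  ((~~ active w v n) : nat)%:R
  = \sum_(t < T | (t < n)%N)
      ((active w v t && notif w v t && (n < t + Zof w v t)%N) : nat)%:R :> R.
Proof.
rewrite -natr_sum; congr (_%:R).
rewrite -(big_ord_widen T (fun t => (active w v t && notif w v t
   && (n < t + Zof w v t)%N) : nat) (ltnW (ltn_ord n))).
transitivity (\sum_(0 <= t < n) ((active w v t && notif w v t
   && (n < t + Zof w v t)%N) : nat))%N; last by rewrite big_mkord.
by rewrite ret_count // /active ltnNge.
Qed.

Lemma Pr_ev (R : realType) V S T (lam : 'I_S -> 'I_T -> R) (g : nat -> R)
  (x : vec R V S T) (v : 'I_V) (n t : 'I_T) :
  Pr lam g x (fun w => active w v t && notif w v t && (n < t + Zof w v t)%N)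
  = Pr lam g x (fun w => active w v t)
    * (\sum_s lam s t * pnot lam g x v s t) * (1 - Gc g (n - t)).
Proof.
transitivity (Pr lam g x (fun w => active w v t && hb v (n - t) (sl t w))).
  by rewrite /Pr; apply: eq_bigr => w _; rewrite -andbA ev_split.
rewrite Pr_event sumKH ?mulrA //.
exact: leq_trans (leq_subr _ _) (ltnW (ltn_ord n)).
Qed.

Lemma Pr_inactive (R : realType) V S T (lam : 'I_S -> 'I_T -> R) (g : nat -> R)
  (x : vec R V S T) (v : 'I_V) (n : 'I_T) :
  Pr lam g x (fun w => active w v n)
  = 1 - \sum_(t < T | (t < n)%N) Pr lam g x (fun w => active w v t)
    * (\sum_s lam s t * pnot lam g x v s t) * (1 - Gc g (n - t)).
Proof.
rewrite Pr_compl; congr (1 - _).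
transitivity (\sum_(t < T | (t < n)%N) Pr lam g x
   (fun w => active w v t && notif w v t && (n < t + Zof w v t)%N)); last first.
  by apply: eq_bigr => t _; exact: Pr_ev.
rewrite /Pr.
transitivity (\sum_(w : Omega V S T) \sum_(t < T | (t < n)%N) weight lam g x w *
   ((active w v t && notif w v t && (n < t + Zof w v t)%N) : nat)%:R).
  by apply: eq_bigr => w _; rewrite (inactive_sum R w v n) big_distrr.
by rewrite exchange_big.
Qed.



Lemma aa_facts (R : realType) V S T (lam : 'I_S -> 'I_T -> R) (g : nat -> R)
  (m : nat) (ys : nat -> vec R V S T) :
  (0 < m)%N -> (forall i, (1 <= i <= m)%N -> inP lam g (ys i)) ->
  forall i, (i <= m)%N ->
  (forall v s t, 0 <= aa_iter m ys i v s t) /\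
  (forall v (t : 'I_T), \sum_(tau < T | (tau <= t)%N) \sum_(s < S)
        lam s tau * aa_iter m ys i v s tau * (1 - Gc g (t - tau)) <= i%:R / m%:R).
Proof.
move=> m0 Hys; elim=> [|i IH] Hi.
  split=> [v s t|v t] //=.
  rewrite mul0r big1 // => tau _; rewrite big1 // => s _; by rewrite mulr0 mul0r.
have [IH1 IH2] := IH (ltnW Hi).
have [Y1 Y2] := Hys i.+1 Hi.
have m0' : 0 <= (m%:R : R)^-1 by rewrite invr_ge0 ler0n.
split=> [v s t|v t] /=.
  apply: addr_ge0 => //; apply: mulr_ge0 => //; by case/andP: (Y1 v s t).
have -> : \sum_(tau < T | (tau <= t)%N) \sum_(s < S)
   lam s tau * (aa_iter m ys i v s tau + ys i.+1 v s tau / m%:R) * (1 - Gc g (t - tau))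
  = \sum_(tau < T | (tau <= t)%N) \sum_(s < S)
      lam s tau * aa_iter m ys i v s tau * (1 - Gc g (t - tau))
    + (\sum_(tau < T | (tau <= t)%N) \sum_(s < S)
      lam s tau * ys i.+1 v s tau * (1 - Gc g (t - tau))) / m%:R.
  rewrite mulr_suml -big_split /=; apply: eq_bigr => tau _.
  rewrite mulr_suml -big_split /=; apply: eq_bigr => s _; ring.
rewrite -natr1 mulrDl; apply: lerD; first exact: IH2.
by apply: ler_wpM2r => //; exact: Y2.
Qed.

Lemma xstar_facts (R : realType) V S T (lam : 'I_S -> 'I_T -> R)
  (p : 'I_V -> 'I_S -> R) (g : nat -> R) (x : vec R V S T) :
  is_xstar lam p g x ->
  (forall v s t, 0 <= x v s t) /\
  (forall v (t : 'I_T), \sum_(tau < T | (tau <= t)%N) \sum_(s < S)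
        lam s tau * x v s tau * (1 - Gc g (t - tau)) <= 1).
Proof.
move=> [xLP [xAA [xSQ [m [hLP hAA hSQ hx _]]]]].
case: hx => [->|[->|->]].
- case: hLP => [[h1 h2] _]; split => // v s t; by case/andP: (h1 v s t).
- case: hAA => m0 [ys [Hys ->]].
  have [A1 A2] := aa_facts m0 (fun i hi => (Hys i hi).1) (leqnn m).
  split => // v t; apply: le_trans (A2 v t) _.
  by rewrite divff // pnatr_eq0 -lt0n.
- split => [v s t|v t].
    by case: (hSQ v) => [[h1 _] _]; case/andP: (h1 s t).
  by case: (hSQ v) => [[_ h2] _]; exact: h2.
Qed.

Lemma beta_bound (R : realType) V S T (lam : 'I_S -> 'I_T -> R)
  (g : nat -> R) (x : vec R V S T) :
  (forall s t, 0 <= lam s t) -> (forall n, 0 <= g n) -> (forall k, Gc g k <= 1) ->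
  (forall v s t, 0 <= x v s t) ->
  (forall v (t : 'I_T), \sum_(tau < T | (tau <= t)%N) \sum_(s < S)
        lam s tau * x v s tau * (1 - Gc g (t - tau)) <= 1) ->
  forall v t, 1 / (2 - qmdhr g) <= beta lam g x v t.
Proof.
move=> lam0 gge0 Gle X0 X1 v t.
have hq1 := q_le1 gge0 Gle.
have hz := hazard gge0 Gle.
rewrite /beta; set q := qmdhr g in hq1 hz *.
have hpos : 0 < 2 - q by lra.
have hq0 : 2 - q != 0 := lt0r_neq0 hpos.
case: t => [[|t1] Ht] /=.
  rewrite big1 ?subr0 => [|t' Ht']; last by rewrite ltn0 in Ht'.
  rewrite ler_pdivrMr // mul1r; lra.
have t1T : (t1 < T)%N := ltnW Ht.
have C := X1 v (Ordinal t1T).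
pose r := (1 - q) / (2 - q).
have r0 : 0 <= r by apply: divr_ge0; lra.
have A : \sum_(t' < T | (t' < t1.+1)%N) \sum_(s < S)
    lam s t' * (x v s t' / (2 - q)) * (1 - Gc g (t1.+1 - t'))
  <= r * \sum_(tau < T | (tau <= Ordinal t1T)%N) \sum_(s < S)
        lam s tau * x v s tau * (1 - Gc g (Ordinal t1T - tau)).
  rewrite big_distrr /=.
  rewrite [X in _ <= X](eq_bigl (fun tau : 'I_T => (tau < t1.+1)%N)); last first.
    by move=> i; rewrite ltnS.
  apply: ler_sum => tau Htau; rewrite big_distrr /=; apply: ler_sum => s _.
  have Htau' : (tau <= t1)%N by rewrite -ltnS.
  rewrite (subSn Htau').
  have c0 : 0 <= lam s tau * (x v s tau / (2 - q)).
    by apply: mulr_ge0 => //; apply: divr_ge0 => //; lra.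
  apply: le_trans (ler_wpM2l c0 (hz (t1 - tau)%N)) _.
  rewrite le_eqVlt; apply/orP; left; apply/eqP; rewrite /r; field.
  exact: hq0.
have rC : r * \sum_(tau < T | (tau <= Ordinal t1T)%N) \sum_(s < S)
        lam s tau * x v s tau * (1 - Gc g (Ordinal t1T - tau)) <= r.
  by have := ler_wpM2l r0 C; rewrite mulr1.
have r1 : 1 - r = 1 / (2 - q) by rewrite /r; field.
lra.
Qed.

Unset Implicit Arguments.

Theorem lemma7 (R : realType) (V S T : nat)
    (lam : 'I_S -> 'I_T -> R) (p : 'I_V -> 'I_S -> R) (g : nat -> R)
    (x : vec R V S T) :
  (forall s t, 0 <= lam s t) ->
  (forall t, \sum_(s < S) lam s t <= 1) ->
  (forall v s, 0 <= p v s <= 1) ->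
  g 0%N = 0 -> (forall n, 0 <= g n) ->
  ((fun n : nat => \sum_(k < n) g k) @ \oo --> (1 : R)) ->
  is_xstar lam p g x ->
  forall (v : 'I_V) (t : 'I_T),
    Pr lam g x (fun w => active w v t) = beta lam g x v t /\
    1 / (2 - qmdhr g) <= beta lam g x v t.
Proof.
move=> lam0 lam1 p01 g0 gge0 Hc Hx v t.
have Gle := Gc_le1 g0 gge0 Hc.
have [X0 X1] := xstar_facts Hx.
have Hb := beta_bound lam0 gge0 Gle X0 X1.
split; last exact: Hb v t.
have hq1 := q_le1 gge0 Gle.
have hpos : 0 < 2 - qmdhr g by lra.
have bpos : forall t, 0 < beta lam g x v t.
  by move=> t0; apply: lt_le_trans (Hb v t0); apply: divr_gt0 => //; exact: ltr01.
suff main : forall N (t : 'I_T), (t < N)%N ->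
    Pr lam g x (fun w => active w v t) = beta lam g x v t.
  exact: main _ t (ltnSn t).
elim=> [|N IH] t' Ht'; first by rewrite ltn0 in Ht'.
rewrite Pr_inactive /beta; congr (1 - _).
apply: eq_bigr => tau Htau.
rewrite IH; last exact: leq_trans Htau Ht'.
rewrite big_distrr big_distrl /=; apply: eq_bigr => s _; rewrite /pnot.
have b0 := lt0r_neq0 (bpos tau).
have q0 := lt0r_neq0 hpos.
field.
by rewrite b0 q0.
Qed.
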